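(* Let $a<b$, integers $1\le p\le n$, $P_1=P_1^T\in\mathbb{R}^{n\times n}$ invertible, $P_0=-P_0^T\in\mathbb{R}^{n\times n}$, $\mathcal{X}=L^2([a,b];\mathbb{R}^n)$, $Z$ a real Hilbert space, $H\in\mathcal{L}(Z,\mathcal{X})$, $\delta t>0$ fixed, and $\mathcal{J}e=P_1\frac{de}{d\zeta}+P_0e$ for $e\in H^1([a,b];\mathbb{R}^n)$. Let $\mathcal{D}^A$ be the set of all $(\delta f_\varepsilon,\delta f_w,\delta f_\partial,e_\varepsilon,e_w,e_\partial)\in(\mathcal{X}\times Z\times\mathbb{R}^n)^2$ with $e_\varepsilon\in H^1([a,b];\mathbb{R}^n)$, $\delta f_\varepsilon=\mathcal{J}e_\varepsilon\delta t+H\delta f_w$, $\delta f_\partial=\frac{1}{\sqrt2}P_1(e_\varepsilon(b)-e_\varepsilon(a))\delta t$, $e_\partial=\frac{1}{\sqrt2}(e_\varepsilon(b)+e_\varepsilon(a))$, $e_w=H^*e_\varepsilon$, where the boundary ports are split as $\delta f_\partial=(\delta f_{\partial,n-p},f_p)$, $e_\partial=(e_{\partial,n-p},e_p)$ with $\delta f_{\partial,n-p},e_{\partial,n-p}\in\mathbb{R}^{n-p}$ and $f_p,e_p\in\mathbb{R}^p$. Let $\mathcal{F}_3,\mathcal{E}_3$ be real Hilbert spaces, $j_3:\mathcal{F}_3\to\mathcal{E}_3$ a unitary invertible linear map, and let $\mathcal{D}^B\subset(\mathcal{F}_3\times\mathbb{R}^p)\times(\mathcal{E}_3\times\mathbb{R}^p)$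 be a Dirac structure with respect to the pairing $\langle(f^B,f,e^B,e),(\tilde f^B,\tilde f,\tilde e^B,\tilde e)\rangle=\langle f^B,j_3^{-1}\tilde e^B\rangle+\langle e^B,j_3\tilde f^B\rangle-\langle f,\tilde e\rangle-\langle e,\tilde f\rangle$. Define the composition $\mathcal{D}^A\circ\mathcal{D}^B$ as the set of all $(\delta f^A,f^B,e^A,e^B)$ with $\delta f^A=(\delta f_\varepsilon,\delta f_w,\delta f_{\partial,n-p})$, $e^A=(e_\varepsilon,e_w,e_{\partial,n-p})$, $f^B\in\mathcal{F}_3$, $e^B\in\mathcal{E}_3$, for which there exist $f_p,e_p\in\mathbb{R}^p$ with $(\delta f^A,f_p,e^A,e_p)\in\mathcal{D}^A$ and $(f^B,-f_p,e^B,e_p)\in\mathcal{D}^B$, and equip it with the pairing $$\langle\mathfrak{d},\tilde{\mathfrak{d}}\rangle_\dagger=\langle\delta f_\varepsilon,\tilde e_\varepsilon\rangle-\langle\delta f_w,\tilde e_w\rangle-\langle\delta f_{\partial,n-p},\tilde e_{\partial,n-p}\rangle+\langle f^B,j_3^{-1}\tilde e^B\rangle+\langle e_\varepsilon,\delta\tilde f_\varepsilon\rangle-\langle e_w,\delta\tilde f_w\rangle-\langle e_{\partial,n-p},\delta\tilde f_{\partial,n-p}\rangle+\langle e^B,j_3\tilde f^B\rangle.$$ Then $\langle\mathfrak{d},\mathfrak{d}\rangle_\dagger=0$ for every $\mathfrak{d}\in\mathcal{D}^A\circ\mathcal{D}^B$.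
   Context: Inner products on $\mathcal{X}$ are the standard $L^2$ ones and $H^*$ is the $L^2$-adjoint of $H$. A Dirac structure with respect to a symmetric bilinear pairing on a bond space is a linear subspace equal to its orthogonal complement with respect to that pairing. $\mathcal{D}^A$ is the stochastic port-Hamiltonian Dirac structure, split into the part $\mathcal{X}\times Z\times\mathbb{R}^{n-p}$ (with $j_1=\mathrm{diag}(I_\mathcal{X},-I_Z,-I_{\mathbb{R}^{n-p}})$) and the interconnection part $\mathbb{R}^p$ (with $j_2=-I_{\mathbb{R}^p}$); the interconnection of $\mathcal{D}^A$ and $\mathcal{D}^B$ is through the $p$ boundary ports $f_p,e_p$. *)

(* Defs.v *)
From HB Require Import structures.
From mathcomp Require Import all_boot all_order all_algebra.
From mathcomp Require Import all_classical all_reals all_analysis.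
Set Implicit Arguments. Unset Strict Implicit. Unset Printing Implicit Defensive.
Import Order.TTheory GRing.Theory Num.Theory.
Import numFieldNormedType.Exports.
Local Open Scope classical_set_scope.
Local Open Scope ring_scope.

Section Defs.
Variable R : realType.

Definition itv_ab (a b : R) : set R := [set x | a <= x <= b].

Notation leb := (@lebesgue_measure R).

Definition dotv k (u v : 'cV[R]_k) : R := \sum_(i < k) u i 0 * v i 0.

Definition hilbert_ip (V : completeNormedModType R) (ip : V -> V -> R) : Prop :=
  [/\ (forall x y, ip x y = ip y x),
      (forall (c : R) x y z, ip (c *: x + y) z = c * ip x z + ip y z)
    & (forall x, ip x x = `|x| ^+ 2)].

Definition L2 n (a b : R) (u : R -> 'cV[R]_n) : Prop :=
  forall i : 'I_n,
    measurable_fun (itv_ab a b) (fun x => u x i 0) /\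
    leb.-integrable (itv_ab a b) (fun x => ((u x i 0) ^+ 2)%:E).

Definition L2eq n (a b : R) (u v : R -> 'cV[R]_n) : Prop :=
  {ae leb, forall x, itv_ab a b x -> u x = v x}.

Definition L2ip n (a b : R) (u v : R -> 'cV[R]_n) : R :=
  \sum_(i < n) Rintegral leb (itv_ab a b) (fun x => u x i 0 * v x i 0).

(** [e] belongs to H^1([a,b];R^n) with weak derivative [g] in L^2, [e] being
    the (absolutely) continuous representative:
    e(x) = e(a) + \int_a^x g  for every x in [a,b]. *)
Definition H1_with_deriv n (a b : R) (e g : R -> 'cV[R]_n) : Prop :=
  L2 a b g /\
  forall x, a <= x <= b -> forall i : 'I_n,
    e x i 0 = e a i 0 + Rintegral leb (itv_ab a x) (fun t => g t i 0).

Definition bounded_linear_to_L2 n (a b : R) (Z : completeNormedModType R)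
    (H : Z -> R -> 'cV[R]_n) : Prop :=
  [/\ (forall z, L2 a b (H z)),
      (forall (c : R) z1 z2,
          L2eq a b (H (c *: z1 + z2)) (fun x => c *: H z1 x + H z2 x))
    & exists C : R, forall z, L2ip a b (H z) (H z) <= C * `|z| ^+ 2].

Definition is_adjoint n (a b : R) (Z : completeNormedModType R)
    (ipZ : Z -> Z -> R) (H : Z -> R -> 'cV[R]_n) (Hs : (R -> 'cV[R]_n) -> Z) :=
  forall z x, L2 a b x -> L2ip a b (H z) x = ipZ z (Hs x).

(** The stochastic port-Hamiltonian Dirac structure D^A, with n = m + p
    (m = n - p): membership of (df_eps, df_w, df_d, e_eps, e_w, e_d). *)
Definition DA (m p : nat) (a b : R) (P1 P0 : 'M[R]_(m + p))
    (Z : completeNormedModType R) (H : Z -> R -> 'cV[R]_(m + p))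
    (Hs : (R -> 'cV[R]_(m + p)) -> Z) (dt : R)
    (dfe : R -> 'cV[R]_(m + p)) (dfw : Z) (dfd : 'cV[R]_(m + p))
    (ee : R -> 'cV[R]_(m + p)) (ew : Z) (ed : 'cV[R]_(m + p)) : Prop :=
  [/\ L2 a b dfe /\ L2 a b ee,
      (exists g, H1_with_deriv a b ee g /\
         L2eq a b dfe (fun x => dt *: (P1 *m g x + P0 *m ee x) + H dfw x)),
      dfd = ((Num.sqrt 2)^-1 * dt) *: (P1 *m (ee b - ee a)),
      ed = (Num.sqrt 2)^-1 *: (ee b + ee a)
    & ew = Hs ee].

Definition pairB (p : nat) (F3 E3 : completeNormedModType R)
    (ipF : F3 -> F3 -> R) (ipE : E3 -> E3 -> R)
    (j3 : F3 -> E3) (j3inv : E3 -> F3)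
    (x y : (F3 * 'cV[R]_p) * (E3 * 'cV[R]_p)) : R :=
  let: ((fB, f), (eB, e)) := x in
  let: ((tfB, tf), (teB, te)) := y in
  ipF fB (j3inv teB) + ipE eB (j3 tfB) - dotv f te - dotv e tf.

Definition dirac_structure (V : lmodType R) (pair : V -> V -> R) (D : set V) : Prop :=
  [/\ D 0,
      (forall (c : R) x y, D x -> D y -> D (c *: x + y))
    & (forall x, D x <-> (forall y, D y -> pair y x = 0))].

Definition DAoDB (m p : nat) (a b : R) (P1 P0 : 'M[R]_(m + p))
    (Z : completeNormedModType R) (H : Z -> R -> 'cV[R]_(m + p))
    (Hs : (R -> 'cV[R]_(m + p)) -> Z) (dt : R)
    (F3 E3 : completeNormedModType R)
    (DB : set ((F3 * 'cV[R]_p) * (E3 * 'cV[R]_p)))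
    (dfe : R -> 'cV[R]_(m + p)) (dfw : Z) (dfdm : 'cV[R]_m) (fB : F3)
    (ee : R -> 'cV[R]_(m + p)) (ew : Z) (edm : 'cV[R]_m) (eB : E3) : Prop :=
  exists (fp ep : 'cV[R]_p),
    DA a b P1 P0 H Hs dt dfe dfw (col_mx dfdm fp) ee ew (col_mx edm ep) /\
    DB ((fB, - fp), (eB, ep)).

Definition pair_dagger (m p : nat) (a b : R) (Z : completeNormedModType R)
    (ipZ : Z -> Z -> R) (F3 E3 : completeNormedModType R)
    (ipF : F3 -> F3 -> R) (ipE : E3 -> E3 -> R)
    (j3 : F3 -> E3) (j3inv : E3 -> F3)
    (d td : ((R -> 'cV[R]_(m + p)) * Z * 'cV[R]_m * F3) *
            ((R -> 'cV[R]_(m + p)) * Z * 'cV[R]_m * E3)) : R :=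
  let: ((dfe, dfw, dfdm, fB), (ee, ew, edm, eB)) := d in
  let: ((tdfe, tdfw, tdfdm, tfB), (tee, tew, tedm, teB)) := td in
  L2ip a b dfe tee - ipZ dfw tew - dotv dfdm tedm + ipF fB (j3inv teB)
  + L2ip a b ee tdfe - ipZ ew tdfw - dotv edm tdfdm + ipE eB (j3 tfB).

End Defs.

(* Main.v *)
Require Import Defs.
From HB Require Import structures.
From mathcomp Require Import all_boot all_order all_algebra.
From mathcomp Require Import all_classical all_reals all_analysis.
From mathcomp Require Import measurable_realfun.
From mathcomp Require Import ring lra.
Import Order.TTheory GRing.Theory Num.Theory.
Import numFieldNormedType.Exports.
Local Open Scope classical_set_scope.
Local Open Scope ring_scope.

Section Aux.
Context {R : realType}.
Implicit Types (D : set (measurableTypeR R)).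
Notation mu := (@lebesgue_measure R).
Local Notation T := (measurableTypeR R).

Lemma itv_abE (a b : R) : (itv_ab a b : set T) = [set` Interval (BLeft a) (BRight b)].
Proof. by apply/seteqP; split => x /=; rewrite in_itv. Qed.

Lemma mitv (a b : R) : measurable (itv_ab a b : set T).
Proof. rewrite itv_abE; exact: measurable_itv. Qed.

Definition sq (D : set T) (u : R -> R) :=
  @measurable_fun _ _ T R D u /\ mu.-integrable D (fun x => (u x ^+ 2)%:E).

Definition Int (D : set T) (u : R -> R) := mu.-integrable D (EFin \o u).

Lemma IntD D u v : measurable D -> Int D u -> Int D v -> Int D (fun x => u x + v x).
Proof.
move=> mD iu iv; have := integrableD mD iu iv.
by apply: eq_integrable => // x _ /=; rewrite EFinD.
Qed.

Lemma IntZ D c u : measurable D -> Int D u -> Int D (fun x => c * u x).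
Proof.
move=> mD iu; have := integrableZl mD c iu.
by apply: eq_integrable => // x _ /=; rewrite EFinM.
Qed.

Lemma IntN D u : measurable D -> Int D u -> Int D (fun x => - u x).
Proof.
move=> mD iu; have := @IntZ D (-1) u mD iu.
by apply: eq_integrable => // x _ /=; rewrite mulN1r.
Qed.

Lemma IntB D u v : measurable D -> Int D u -> Int D v -> Int D (fun x => u x - v x).
Proof. by move=> mD iu iv; apply: IntD => //; exact: IntN. Qed.

Lemma Int_eq D u v : measurable D -> {in D, u =1 v} -> Int D u -> Int D v.
Proof. by move=> mD uv; apply: eq_integrable => // x xD /=; rewrite uv. Qed.

Lemma Int_sum D (I : Type) (s : seq I) (f : I -> R -> R) : measurable D ->
  (forall k, Int D (f k)) -> Int D (fun x => \sum_(k <- s) f k x).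
Proof.
move=> mD hf; have := @integrable_sum _ _ _ mu D mD I s xpredT (fun k x => (f k x)%:E) (fun k _ => hf k).
by apply: eq_integrable => // x _ /=; rewrite sumEFin.
Qed.

Lemma Rint_sum D (I : Type) (s : seq I) (f : I -> R -> R) : measurable D ->
  (forall k, Int D (f k)) ->
  Rintegral mu D (fun x => \sum_(k <- s) f k x) = \sum_(k <- s) Rintegral mu D (f k).
Proof.
move=> mD hf; elim: s => [|k s IH].
  rewrite big_nil; under eq_Rintegral do rewrite big_nil.
  by rewrite Rintegral_cst // mul0r.
rewrite big_cons -IH; under eq_Rintegral do rewrite big_cons.
rewrite RintegralD //; [exact: hf|exact: Int_sum].
Qed.

Lemma Int_prod D u v : measurable D -> sq D u -> sq D v -> Int D (fun x => u x * v x).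
Proof.
move=> mD [mu1 iu] [mv iv].
apply: (@le_integrable _ _ _ mu D mD _ (fun x => (u x ^+ 2 + v x ^+ 2)%:E)).
- by apply/measurable_EFinP; exact: measurable_funM.
- move=> x _; rewrite !abse_EFin lee_fin normrM.
  rewrite (@ger0_norm _ (_ + _)); last by rewrite addr_ge0 // sqr_ge0.
  rewrite -(real_normK (num_real (u x))) -(real_normK (num_real (v x))).
  have := normr_ge0 (u x); have := normr_ge0 (v x).
  set p := `|u x|; set q := `|v x|; move=> q0 p0; nra.
- have := integrableD mD iu iv.
  by apply: eq_integrable => // x _ /=; rewrite EFinD.
Qed.

Lemma sq_cst1 a b : sq (itv_ab a b) (fun=> 1).
Proof.
split; first exact: measurable_cst.
apply: (@measurable_bounded_integrable _ _ _ mu (fun=> 1 ^+ 2)).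
- exact: mitv.
- rewrite itv_abE; have := lebesgue_measure_itv `[a, b]; rewrite /= => E; rewrite E; case: ifPn => // _.
  by rewrite -EFinD ltry.
- exact: measurable_cst.
- exact: bounded_cst.
Qed.

Lemma sq_Int a b u : sq (itv_ab a b) u -> Int (itv_ab a b) u.
Proof.
move=> su; have := @Int_prod (itv_ab a b) _ _ (mitv a b) su (sq_cst1 a b).
by apply: Int_eq => // [|x _]; [exact: mitv|rewrite mulr1].
Qed.

End Aux.

Section Core.
Context {R : realType}.
Notation mu := (@lebesgue_measure R).
Local Notation T := (measurableTypeR R).

Lemma memI (a b y : R) : (y \in (itv_ab a b : set T)) = (a <= y <= b).
Proof. by apply/idP/idP => [/set_mem//|h]; exact: mem_set. Qed.

Lemma Int_sub (a b c d : R) f : a <= c -> d <= b ->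
  Int (itv_ab a b) f -> Int (itv_ab c d) f.
Proof.
move=> ac db; apply: integrableS; [exact: mitv|exact: mitv|].
by rewrite /itv_ab => x /= /andP[cx xd]; rewrite (le_trans ac cx) (le_trans xd db).
Qed.

Lemma Int_setT (D : set T) f : measurable D -> Int D f ->
  mu.-integrable setT (EFin \o (f \_ D)).
Proof.
by move=> mD iD; rewrite -restrict_EFin; apply/(integrable_mkcond _ mD).
Qed.

Lemma int_patch (D : set T) f : measurable D -> Int D f ->
  (\int[mu]_y ((f \_ D) y)%:E)%E = (Rintegral mu D f)%:E.
Proof.
move=> mD iD; rewrite /Rintegral fineK; last exact: integrable_fin_num.
by rewrite integral_mkcond restrict_EFin.
Qed.

Lemma Rint_split (a b y : R) f : a <= y <= b -> Int (itv_ab a b) f ->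
  Rintegral mu (itv_ab y b) f =
  Rintegral mu (itv_ab a b) f - Rintegral mu (itv_ab a y) f.
Proof.
move=> /andP[ay yb] iI; rewrite !itv_abE.
rewrite (@Rintegral_itvB _ f (BLeft a) (BRight b) y); first last.
- by rewrite bnd_simp.
- by rewrite bnd_simp.
- by rewrite -itv_abE.
rewrite Rintegral_itv_obnd_cbnd //.
apply: integrableS (iI); [exact: mitv|exact: measurable_itv|].
move=> x /=; rewrite in_itv /= => /andP[yx xb]; rewrite /itv_ab /= xb andbT. exact: (le_trans ay (ltW yx)).
Qed.

End Core.

Section Core2.
Context {R : realType}.
Notation mu := (@lebesgue_measure R).
Local Notation T := (measurableTypeR R).

Lemma core (a b : R) (gi gk : R -> R) : a <= b ->
  Int (itv_ab a b) gi -> Int (itv_ab a b) gk ->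
  Int (itv_ab a b) (fun x => gk x * Rintegral mu (itv_ab a x) gi) ->
  Int (itv_ab a b) (fun x => gi x * Rintegral mu (itv_ab a x) gk) ->
  Rintegral mu (itv_ab a b) (fun x => gk x * Rintegral mu (itv_ab a x) gi) +
  Rintegral mu (itv_ab a b) (fun x => gi x * Rintegral mu (itv_ab a x) gk) =
  Rintegral mu (itv_ab a b) gi * Rintegral mu (itv_ab a b) gk.
Proof.
move=> ab iI kI ikG kiG.
set I : set T := itv_ab a b.
have mI : measurable I by exact: mitv.
set u := gi \_ I; set v := gk \_ I.
have mu_ : measurable_fun setT u.
  by apply/(measurable_restrictT _ mI)/measurable_EFinP; exact: (measurable_int mu iI).
have mv_ : measurable_fun setT v.
  by apply/(measurable_restrictT _ mI)/measurable_EFinP; exact: (measurable_int mu kI).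
set S : set (T * T)%type := [set z | z.2 <= z.1].
have mS : measurable S.
  have mf : measurable_fun setT (fun z : (T * T)%type => z.1 - z.2).
    exact: measurable_funB measurable_fst measurable_snd.
  have := mf measurableT [set` `[0, +oo[] (measurable_itv _).
  rewrite setTI; congr measurable.
  by apply/seteqP; split => z /=; rewrite in_itv /= andbT subr_ge0.
pose f := fun z : (T * T)%type => (v z.1 * u z.2 * \1_S z)%:E.
have mf : measurable_fun setT f.
  apply/measurable_EFinP; apply: measurable_funM; last exact: measurable_indic.
  apply: measurable_funM.
    exact: (measurableT_comp (f:=v) (g:=fst)).
  exact: (measurableT_comp (f:=u) (g:=snd)).
have iu := Int_setT _ _ mI iI.
have iv := Int_setT _ _ mI kI.
have if_ : (mu \x mu)%E.-integrable setT f.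
  apply/(integrable12ltyP mu mu mf).
  have Cu_lt : (\int[mu]_y (`|u y|)%:E < +oo)%E.
    case/integrableP: iu => _ h.
    by under eq_integral do rewrite -abse_EFin.
  have Cv_lt : (\int[mu]_y (`|v y|)%:E < +oo)%E.
    case/integrableP: iv => _ h.
    by under eq_integral do rewrite -abse_EFin.
  apply: (le_lt_trans (y := (\int[mu]_x ((`|v x|)%:E * \int[mu]_y (`|u y|)%:E))%E)).
    apply: ge0_le_integral => //.
    - by move=> x _; exact: integral_ge0.
    - have := @measurable_fun_fubini_tonelli_F _ _ _ _ _ mu (abse \o f)
        (measurableT_comp (@abse_measurable _ setT) mf) (fun z => abse_ge0 _).
      by [].
    - apply: emeasurable_funM; last exact: measurable_cst.
      apply/measurable_EFinP; exact: (measurableT_comp (@normr_measurable _ setT) mv_).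
    - move=> x _.
      rewrite -ge0_integralZl //; last first.
        by apply/measurable_EFinP; exact: (measurableT_comp (@normr_measurable _ setT) mu_).
      apply: ge0_le_integral => //.
      + apply: measurableT_comp; first exact: (@abse_measurable _ setT).
        exact: (measurableT_comp (f:=f) (g:=pair x) mf (pair1_measurable x)).
      + apply/measurable_EFinP; apply: measurable_funM; first exact: measurable_cst.
        exact: (measurableT_comp (@normr_measurable _ setT) mu_).
      + move=> y _; rewrite /f abse_EFin -EFinM lee_fin !normrM.
        apply: ler_piMr; first by rewrite mulr_ge0.
        by rewrite indicE; case: (_ \in _); rewrite ?normr1 ?normr0.
  rewrite ge0_integralZr //; last first.
  - exact: integral_ge0.
  - by apply/measurable_EFinP; exact: (measurableT_comp (@normr_measurable _ setT) mv_).
  apply: lte_mul_pinfty => //; first exact: integral_ge0.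
  by rewrite ge0_fin_numE //; exact: integral_ge0.
have memS z : (z \in S) = (z.2 <= z.1) by apply/idP/idP => [/set_mem|/mem_set].
have LHS x : (\int[mu]_y f (x, y))%E =
    (((fun x => gk x * Rintegral mu (itv_ab a x) gi) \_ I) x)%:E.
  rewrite patchE; case: ifPn => [xI|xI].
    have := xI; rewrite memI => /andP[ax xb].
    transitivity (\int[mu]_y ((gk x)%:E * ((gi \_ (itv_ab a x : set T)) y)%:E))%E.
      apply: eq_integral => y _; rewrite /f /v /u !patchE xI !memI indicE memS /=.
      rewrite -EFinM; congr EFin.
      have [ay|ya] := leP a y; have [yx|xy] := leP y x; have [yb|bly] := leP y b;
        rewrite /= ?mulr0 ?mulr1 ?mul0r //; exfalso; lra.
    rewrite integralZl //; last by apply: Int_setT; [exact: mitv | exact: (@Int_sub _ _ _ _ _ _ (lexx a) xb iI)].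
    have E := int_patch _ _ (mitv a x) (@Int_sub _ _ _ _ _ _ (lexx a) xb iI).
    apply: eq_trans (congr1 (fun z => ((gk x)%:E * z)%E) E) _.
    by rewrite EFinM.
  transitivity (\int[mu]_y (cst 0%E) y)%E.
    by apply: eq_integral => y _; rewrite /f /v patchE (negbTE xI) !mul0r.
  by rewrite integral0.
have RHS y : (\int[mu]_x f (x, y))%E =
    (((fun y => gi y * (Rintegral mu (itv_ab a b) gk - Rintegral mu (itv_ab a y) gk)) \_ I) y)%:E.
  rewrite patchE; case: ifPn => [yI|yI].
    have := yI; rewrite memI => /andP[ay yb].
    transitivity (\int[mu]_x ((gi y)%:E * ((gk \_ (itv_ab y b : set T)) x)%:E))%E.
      apply: eq_integral => x _; rewrite /f /v /u !patchE yI !memI indicE memS /=.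
      rewrite -EFinM; congr EFin.
      have [ax|xa] := leP a x; have [yx|xy] := leP y x; have [xb|blx] := leP x b;
        rewrite /= ?mulr0 ?mulr1 ?mul0r ?mulr0 //; try (by rewrite mulrC); exfalso; lra.
    rewrite integralZl //; last by apply: Int_setT; [exact: mitv | exact: (@Int_sub _ _ _ _ _ _ ay (lexx b) kI)].
    have E := int_patch _ _ (mitv y b) (@Int_sub _ _ _ _ _ _ ay (lexx b) kI).
    apply: eq_trans (congr1 (fun z => ((gi y)%:E * z)%E) E) _.
    by rewrite -EFinM (@Rint_split _ a b y gk _ kI) // ay yb.
  transitivity (\int[mu]_x (cst 0%E) x)%E.
    by apply: eq_integral => x _; rewrite /f /u patchE (negbTE yI) mulr0 mul0r.
  by rewrite integral0.
have := Fubini if_.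
under eq_integral do rewrite LHS.
under [X in _ = X]eq_integral do rewrite RHS.
have ikb : Int I (fun y => gi y * Rintegral mu (itv_ab a b) gk).
  apply: (@Int_eq _ I _ _ mI _ (@IntZ _ I (Rintegral mu (itv_ab a b) gk) gi mI iI)) => y _.
  by rewrite mulrC.
rewrite !int_patch //; last first.
  apply: (@Int_eq _ I _ _ mI _ (@IntB _ I _ _ mI ikb kiG)) => y _; by rewrite mulrBr.
move=> [->].
under [X in X + _]eq_Rintegral => y _ do rewrite mulrBr.
rewrite RintegralB // RintegralZr //.
by rewrite subrK mulrC.
Qed.

End Core2.

Section IBP.
Context {R : realType}.
Notation mu := (@lebesgue_measure R).
Local Notation T := (measurableTypeR R).

Lemma ibp_half (a b : R) (gi gk ei : R -> R) :
  sq (itv_ab a b) gk -> sq (itv_ab a b) ei ->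
  (forall x, a <= x <= b -> ei x = ei a + Rintegral mu (itv_ab a x) gi) ->
  Int (itv_ab a b) (fun x => gk x * Rintegral mu (itv_ab a x) gi) /\
  Rintegral mu (itv_ab a b) (fun x => gk x * ei x) =
  ei a * Rintegral mu (itv_ab a b) gk +
  Rintegral mu (itv_ab a b) (fun x => gk x * Rintegral mu (itv_ab a x) gi).
Proof.
move=> sk si he.
have mI := mitv a b.
have ike := @Int_prod _ _ _ _ mI sk si.
have ik := @sq_Int _ a b _ sk.
have ikG : Int (itv_ab a b) (fun x => gk x * Rintegral mu (itv_ab a x) gi).
  apply: (@Int_eq _ _ _ _ mI _ (@IntB _ _ _ _ mI ike (@IntZ _ _ (ei a) _ mI ik))).
  move=> x /set_mem xI; rewrite (he x xI); ring.
split => //.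
rewrite -RintegralZl // -RintegralD //; last exact: (@IntZ _ _ (ei a) _ mI ik).
apply: eq_Rintegral => x /set_mem xI; rewrite (he x xI); ring.
Qed.

Lemma ibp (a b : R) (gi gk ei ek : R -> R) : a <= b ->
  sq (itv_ab a b) gi -> sq (itv_ab a b) gk ->
  sq (itv_ab a b) ei -> sq (itv_ab a b) ek ->
  (forall x, a <= x <= b -> ei x = ei a + Rintegral mu (itv_ab a x) gi) ->
  (forall x, a <= x <= b -> ek x = ek a + Rintegral mu (itv_ab a x) gk) ->
  Rintegral mu (itv_ab a b) (fun x => gk x * ei x) +
  Rintegral mu (itv_ab a b) (fun x => gi x * ek x) = ei b * ek b - ei a * ek a.
Proof.
move=> ab si sk sei sek hi hk.
have [i1 ->] := @ibp_half a b gi gk ei sk sei hi.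
have [i2 ->] := @ibp_half a b gk gi ek si sek hk.
have := @core _ a b gi gk ab (@sq_Int _ a b _ si) (@sq_Int _ a b _ sk) i1 i2.
have := hi b; rewrite ab lexx => /(_ isT) Eb.
have := hk b; rewrite ab lexx => /(_ isT) Ek.
set A := Rintegral mu (itv_ab a b) (fun x => gk x * _).
set B := Rintegral mu (itv_ab a b) (fun x => gi x * _).
move=> HC.
rewrite Eb Ek.
have -> : ei a * Rintegral mu (itv_ab a b) gk + A + (ek a * Rintegral mu (itv_ab a b) gi + B)
  = ei a * Rintegral mu (itv_ab a b) gk + ek a * Rintegral mu (itv_ab a b) gi + (A + B) by ring.
rewrite HC; ring.
Qed.

End IBP.

Section Alg.
Context {R : realType}.
Notation mu := (@lebesgue_measure R).

Lemma sym_swap n (A : 'M[R]_n) (F : 'I_n -> 'I_n -> R) : A^T = A ->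
  \sum_i \sum_k A i k * F k i = \sum_i \sum_k A i k * F i k.
Proof.
move=> sA; rewrite exchange_big /=; apply: eq_bigr => i _; apply: eq_bigr => k _.
by have := congr1 (fun M : 'M[R]_n => M i k) sA; rewrite mxE => ->.
Qed.

Lemma skew_swap n (A : 'M[R]_n) (F : 'I_n -> 'I_n -> R) : A^T = - A ->
  \sum_i \sum_k A i k * F k i = - \sum_i \sum_k A i k * F i k.
Proof.
move=> sA; rewrite exchange_big /= -sumrN; apply: eq_bigr => i _.
rewrite -sumrN; apply: eq_bigr => k _.
by have := congr1 (fun M : 'M[R]_n => M i k) sA; rewrite !mxE => ->; rewrite mulNr.
Qed.

Lemma dotvC k (u v : 'cV[R]_k) : dotv u v = dotv v u.
Proof. by apply: eq_bigr => i _; rewrite mulrC. Qed.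

Lemma dotvN k (u v : 'cV[R]_k) : dotv (- u) v = - dotv u v.
Proof. by rewrite /dotv -sumrN; apply: eq_bigr => i _; rewrite mxE mulNr. Qed.

Lemma dotv_col m p (u1 v1 : 'cV[R]_m) (u2 v2 : 'cV[R]_p) :
  dotv (col_mx u1 u2) (col_mx v1 v2) = dotv u1 v1 + dotv u2 v2.
Proof. by rewrite /dotv big_split_ord /=; congr (_ + _); apply: eq_bigr => i _; rewrite ?col_mxEu ?col_mxEd. Qed.

Lemma L2ipC n (a b : R) (u v : R -> 'cV[R]_n) : L2ip a b u v = L2ip a b v u.
Proof. by apply: eq_bigr => i _; apply: eq_Rintegral => x _; rewrite mulrC. Qed.

Lemma L2_sq n (a b : R) (u : R -> 'cV[R]_n) i : L2 a b u -> sq (itv_ab a b) (fun x => u x i 0).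
Proof. by move=> /(_ i) [m1 m2]; split. Qed.

End Alg.

Section Comp.
Context {R : realType}.
Notation mu := (@lebesgue_measure R).

Lemma comp_i (a b : R) n (P1 P0 : 'M[R]_n) (Z : completeNormedModType R)
  (H : Z -> R -> 'cV[R]_n) (dt : R) (dfe : R -> 'cV[R]_n) (dfw : Z)
  (ee g : R -> 'cV[R]_n) (i : 'I_n) :
  L2 a b dfe -> L2 a b ee -> L2 a b g -> L2 a b (H dfw) ->
  L2eq a b dfe (fun x => dt *: (P1 *m g x + P0 *m ee x) + H dfw x) ->
  Rintegral mu (itv_ab a b) (fun x => dfe x i 0 * ee x i 0) =
  dt * (\sum_k P1 i k * Rintegral mu (itv_ab a b) (fun x => g x k 0 * ee x i 0)
      + \sum_k P0 i k * Rintegral mu (itv_ab a b) (fun x => ee x k 0 * ee x i 0))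
  + Rintegral mu (itv_ab a b) (fun x => H dfw x i 0 * ee x i 0).
Proof.
move=> Ldfe Lee Lg LH Hae.
have mI := mitv a b.
have sg k := @L2_sq _ _ a b _ k Lg.
have se k := @L2_sq _ _ a b _ k Lee.
have I1 k : Int (itv_ab a b) (fun x => P1 i k * (g x k 0 * ee x i 0)).
  exact: (@IntZ _ _ _ _ mI (@Int_prod _ _ _ _ mI (sg k) (se i))).
have I0 k : Int (itv_ab a b) (fun x => P0 i k * (ee x k 0 * ee x i 0)).
  exact: (@IntZ _ _ _ _ mI (@Int_prod _ _ _ _ mI (se k) (se i))).
have Ih : Int (itv_ab a b) (fun x => H dfw x i 0 * ee x i 0).
  exact: (@Int_prod _ _ _ _ mI (@L2_sq _ _ a b _ i LH) (se i)).
have Is1 := @Int_sum _ _ _ (index_enum 'I_n) _ mI I1.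
have Is0 := @Int_sum _ _ _ (index_enum 'I_n) _ mI I0.
have Isum := @IntD _ _ _ _ mI Is1 Is0.
have Iw := @IntD _ _ _ _ mI (@IntZ _ _ dt _ mI Isum) Ih.
have Idf : Int (itv_ab a b) (fun x => dfe x i 0 * ee x i 0).
  exact: (@Int_prod _ _ _ _ mI (@L2_sq _ _ a b _ i Ldfe) (se i)).
transitivity (Rintegral mu (itv_ab a b) (fun x => dt * ((\sum_k P1 i k * (g x k 0 * ee x i 0))
   + \sum_k P0 i k * (ee x k 0 * ee x i 0)) + H dfw x i 0 * ee x i 0)).
  rewrite /Rintegral; congr fine; apply: ae_eq_integral => //.
  - exact: (measurable_int mu Idf).
  - exact: (measurable_int mu Iw).
  - move: Hae; rewrite /L2eq /ae_eq; apply: (@filterS _ _ (ae_filter_ringOfSetsType mu)) => x hx xI; rewrite /= (hx xI) !mxE.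
    congr EFin; rewrite mulrDl -mulrA mulrDl !big_distrl /=.
    by congr (_ * (_ + _) + _); apply: eq_bigr => k _; rewrite mulrA.
rewrite RintegralD //; last exact: (@IntZ _ _ dt _ mI Isum).
rewrite (@RintegralZl _ _ _ mu _ _ dt mI Isum) (RintegralD mI Is1 Is0).
rewrite (@Rint_sum _ _ _ _ _ mI I1) (@Rint_sum _ _ _ _ _ mI I0).
congr (dt * (_ + _) + _); apply: eq_bigr => k _; rewrite RintegralZl //.
- exact: (@Int_prod _ _ _ _ mI (sg k) (se i)).
- exact: (@Int_prod _ _ _ _ mI (se k) (se i)).
Qed.

End Comp.

Theorem lemma2 (R : realType) (a b : R) (m p : nat)
  (P1 P0 : 'M[R]_(m + p))
  (Z : completeNormedModType R) (ipZ : Z -> Z -> R)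
  (H : Z -> R -> 'cV[R]_(m + p)) (Hs : (R -> 'cV[R]_(m + p)) -> Z) (dt : R)
  (F3 E3 : completeNormedModType R)
  (ipF : F3 -> F3 -> R) (ipE : E3 -> E3 -> R)
  (j3 : F3 -> E3) (j3inv : E3 -> F3)
  (DB : set ((F3 * 'cV[R]_p) * (E3 * 'cV[R]_p))) :
  a < b -> (1 <= p)%N ->
  P1^T = P1 -> P1 \in unitmx -> P0^T = - P0 ->
  hilbert_ip ipZ ->
  bounded_linear_to_L2 a b H -> is_adjoint a b ipZ H Hs ->
  0 < dt ->
  hilbert_ip ipF -> hilbert_ip ipE ->
  (forall (c : R) x y, j3 (c *: x + y) = c *: j3 x + j3 y) ->
  cancel j3 j3inv -> cancel j3inv j3 ->
  (forall x y, ipE (j3 x) (j3 y) = ipF x y) ->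
  dirac_structure (pairB ipF ipE j3 j3inv) DB ->
  forall dfe dfw dfdm fB ee ew edm eB,
    DAoDB a b P1 P0 H Hs dt DB dfe dfw dfdm fB ee ew edm eB ->
    pair_dagger a b ipZ ipF ipE j3 j3inv
      ((dfe, dfw, dfdm, fB), (ee, ew, edm, eB))
      ((dfe, dfw, dfdm, fB), (ee, ew, edm, eB)) = 0.
Proof.
move=> ab p1 P1s P1u P0s hZ Hb Had dt0 hF hE j3lin j3K j3invK j3iso DBd
  dfe dfw dfdm fB ee ew edm eB [fp [ep [hDA hDB]]].
case: hDA => [[Ldfe Lee] [g [[Lg He] Hae]] Hdfd Hed Hew].
case: DBd => _ _ Dorth.
have HB0 := (Dorth _).1 hDB _ hDB.
rewrite /pairB /= in HB0.
case: hZ => symZ _ _.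
case: Hb => LH _ _.
have KEY : L2ip a b dfe ee - ipZ dfw ew = dotv (col_mx dfdm fp) (col_mx edm ep).
  have mI := mitv a b.
  rewrite Hew -(Had dfw ee Lee).
  pose c1 k i := Rintegral lebesgue_measure (itv_ab a b) (fun x => g x k 0 * ee x i 0).
  pose c0 k i := Rintegral lebesgue_measure (itv_ab a b) (fun x => ee x k 0 * ee x i 0).
  pose S1 := \sum_i \sum_k P1 i k * c1 k i.
  pose S0 := \sum_i \sum_k P0 i k * c0 k i.
  pose Q := \sum_i \sum_k P1 i k * (ee b i 0 * ee b k 0 - ee a i 0 * ee a k 0).
  have L2e : L2ip a b dfe ee = dt * (S1 + S0) + L2ip a b (H dfw) ee.
    rewrite /L2ip; under eq_bigr => i _ do rewrite (@comp_i _ a b _ P1 P0 _ H dt dfe dfw ee g i Ldfe Lee Lg (LH dfw) Hae).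
    by rewrite big_split /= -mulr_sumr big_split.
  have S0z : S0 = 0.
    have h1 := @skew_swap _ _ P0 (fun k i => c0 k i) P0s.
    have h2 : \sum_i \sum_k P0 i k * c0 i k = S0.
      apply: eq_bigr => i _; apply: eq_bigr => k _; congr (_ * _).
      by apply: eq_Rintegral => x _; rewrite mulrC.
    rewrite h2 in h1; have h3 : S0 = - S0 := h1; lra.
  have S1v : 2 * S1 = Q.
    have -> : 2 * S1 = S1 + S1 by ring.
    have h' : S1 = \sum_i \sum_k P1 i k * c1 i k := @sym_swap _ _ P1 (fun k i => c1 k i) P1s.
    rewrite {2}h' /S1 -big_split.
    apply: eq_bigr => i _; rewrite -big_split; apply: eq_bigr => k _.
    rewrite /= -mulrDr.
    congr (_ * _).
    exact: (@ibp _ a b (fun x => g x i 0) (fun x => g x k 0) (fun x => ee x i 0)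
      (fun x => ee x k 0) (ltW ab) (@L2_sq _ _ a b _ i Lg) (@L2_sq _ _ a b _ k Lg)
      (@L2_sq _ _ a b _ i Lee) (@L2_sq _ _ a b _ k Lee)
      (fun x hx => He x hx i) (fun x hx => He x hx k)).
  have RHS : dotv (col_mx dfdm fp) (col_mx edm ep) = dt / 2 * Q.
    pose X := \sum_i \sum_k P1 i k * (ee b k 0 * ee a i 0).
    pose Y := \sum_i \sum_k P1 i k * (ee b i 0 * ee a k 0).
    have XY : X = Y by exact: (@sym_swap _ _ P1 (fun k i => ee b k 0 * ee a i 0) P1s).
    have E1 : \sum_i \sum_k P1 i k * ((ee b k 0 - ee a k 0) * (ee b i 0 + ee a i 0))
        = Q + (X - Y).
      rewrite /Q /X /Y -sumrB -big_split; apply: eq_bigr => i _ /=.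
      rewrite -sumrB -big_split; apply: eq_bigr => k _ /=; ring.
    rewrite XY subrr addr0 in E1; rewrite -E1.
    have ss : (Num.sqrt (2:R))^-1 * (Num.sqrt 2)^-1 = 2^-1.
      by rewrite -invfM -expr2 sqr_sqrtr // ler0n.
    rewrite Hdfd Hed /dotv mulr_sumr; apply: eq_bigr => i _.
    rewrite !mxE [LHS]mulrC mulrA !mulr_sumr; apply: eq_bigr => k _.
    rewrite !mxE -ss; ring.
  rewrite L2e S0z RHS -S1v addr0 addrK -mulrA mulKf //.
rewrite dotv_col in KEY.
rewrite dotvN (@dotvC _ _ ep (-fp)) dotvN in HB0.
rewrite /pair_dagger (@L2ipC _ _ a b ee dfe) (symZ ew dfw) (@dotvC _ _ edm dfdm).
lra.
Qed.
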